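(* For the Byzantine-tolerant algorithm described in the context: let $\gamma$ be a degree-stabilized configuration and let $\gamma\xrightarrow{t}\gamma'$ be a transition in which the rule Candidacy? is executed on a node $u\in V_1$ (the set $t$ being arbitrary otherwise). Then, whatever the other moves in $t$ and the behaviour of Byzantine nodes, the probability that $s_u^{\gamma'}=\top$ and $s_v^{\gamma'}=\bot$ for all $v\in N(u)$ is at least $\frac{1}{e(\Delta+1)}$.
   Context: Network and model. $G=(V,E)$ is a finite simple undirected graph; $N(u)$ is the open neighbourhood of $u$, $N[u]=N(u)\cup\{u\}$, $\deg(u)=|N(u)|$, $\Delta=\max_{u\in V}\deg(u)$. Each node holds local variables; a configuration is an assignment of values to all local variables. A rule ''guard $\to$ command'' is enabled on $u$ in $\gamma$ if its guard (a predicate on the variables of $u$ and its neighbours) holds; its command rewrites only $u$'s variables, possibly randomly. A transition $\gamma\xrightarrow{t}\gamma'$ is given by a nonempty set $t$ of moves $(u,r)$ with $r$ enabled on $u$ in $\gamma$, at most one per node, all executed simultaneously from the values in $\gamma$, with independent random choices. Byzantine nodes. A subset $B\subseteq V$ consists of Byzantine nodes, which when activated may set their local variables to arbitrary values. $d(u,B)$ is the graph distance from $u$ to $B$ and $V_i=\{u\in V: d(u,B)>i\}$. Algorithm. Each node $u$ has variables $s_u\in\{\bot,\top\}$ and $x_u\in\mathbb{N}$; $Rand(q)$ returns $1$ with probability $q$, else $0$, independently for each call. Non-Byzantine nodes follow the rules: (Refresh) $x_u\neq \deg(u)\ \to\ x_u:=\deg(u)$. (Candidacy?) $x_u=\deg(u)\wedge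 s_u=\bot\wedge \forall v\in N(u),\ s_v=\bot\ \to$ if $Rand\big(\frac{1}{1+\max\{x_v: v\in N[u]\}}\big)=1$ then $s_u:=\top$. (Withdrawal) $x_u=\deg(u)\wedge s_u=\top\wedge \exists v\in N(u),\ s_v=\top\ \to\ s_u:=\bot$. $\gamma$ is degree-stabilized if $x_u^\gamma=\deg(u)$ for every non-Byzantine node $u$. *)

(* Defs.v *)
From HB Require Import structures.
From mathcomp Require Import all_boot all_order all_algebra.
From mathcomp Require Import reals sequences exp.
Set Implicit Arguments. Unset Strict Implicit. Unset Printing Implicit Defensive.
Import Order.TTheory GRing.Theory Num.Theory.

Section Model.
Variables (V : finType) (e : rel V).

Definition nbh (u : V) : {set V} := [set v | e u v].
Definition deg (u : V) : nat := #|nbh u|.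
Definition maxdeg : nat := \max_(u : V) deg u.

(* a configuration: s_u (true = top, false = bot) and x_u *)
Record config := Config { sv : V -> bool; xv : V -> nat }.

Inductive rule := Refresh | Candidacy | Withdrawal.

Definition enabled (g : config) (u : V) (r : rule) : bool :=
  match r with
  | Refresh => xv g u != deg u
  | Candidacy => (xv g u == deg u) && ~~ sv g u && [forall v, e u v ==> ~~ sv g v]
  | Withdrawal => (xv g u == deg u) && sv g u && [exists v, e u v && sv g v]
  end.

Definition degree_stabilized (B : {set V}) (g : config) : Prop :=
  forall u, u \notin B -> xv g u = deg u.

(* V_1 = { u | d(u,B) > 1 }: u is not Byzantine and has no Byzantine neighbour
   (d(u,B) = +oo > 1 when no Byzantine node is reachable). *)
Definition in_V1 (B : {set V}) (u : V) : bool :=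
  (u \notin B) && [forall v, e u v ==> (v \notin B)].

(* A set of moves t, encoded as t : V -> option rule (at most one move per node). *)
Definition valid_moves (B : {set V}) (g : config) (t : V -> option rule) : Prop :=
  (exists v, isSome (t v)) /\
  (forall v r, v \notin B -> t v = Some r -> enabled g v r).

Local Open Scope ring_scope.

(* probability parameter of Rand in Candidacy? on node u:
   1 / (1 + max { x_v : v in N[u] }) *)
Definition cand_max (g : config) (u : V) : nat :=
  (\max_(v | (v == u) || e u v) xv g v)%N.

Definition cand_prob (R : realType) (g : config) (u : V) : R :=
  (1 + (cand_max g u)%:R)^-1.

(* Result of the transition given the vector of random bits c (c v is the
   outcome of Rand on node v; only used if v executes Candidacy?) and the
   Byzantine behaviour byz (new values of an activated Byzantine node,
   possibly depending on the random bits). *)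
Definition step (B : {set V}) (g : config) (t : V -> option rule)
  (byz : {ffun V -> bool} -> V -> bool * nat) (c : {ffun V -> bool}) : config :=
  Config
    (fun v => if v \in B then (if t v is Some _ then (byz c v).1 else sv g v)
              else match t v with
                   | None => sv g v
                   | Some Refresh => sv g v
                   | Some Candidacy => if c v then true else sv g v
                   | Some Withdrawal => false
                   end)
    (fun v => if v \in B then (if t v is Some _ then (byz c v).2 else xv g v)
              else match t v with
                   | Some Refresh => deg v
                   | _ => xv g v
                   end).

(* probability weight of a vector of independent random bits, bit v being 1
   with probability cand_prob g v *)
Definition weight (R : realType) (g : config) (c : {ffun V -> bool}) : R :=
  \prod_(v : V) (if c v then cand_prob R g v else 1 - cand_prob R g v).

Definition prob_event (R : realType) (B : {set V}) (g : config)
  (t : V -> option rule) (byz : {ffun V -> bool} -> V -> bool * nat)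
  (E : config -> bool) : R :=
  \sum_(c : {ffun V -> bool} | E (step B g t byz c)) weight R g c.

End Model.

(* Main.v *)
Require Import Defs.
From HB Require Import structures.
From mathcomp Require Import all_boot all_order all_algebra.
From mathcomp Require Import reals sequences exp.
From mathcomp Require Import ring lra.
Import Order.TTheory GRing.Theory Num.Theory.
Local Open Scope ring_scope.
Lemma aux (R : realType) (d : nat) : (expR 1 : R)^-1 <= (1 - (1 + d%:R)^-1)^+d.
Proof.
case: d => [|d].
  rewrite expr0 invf_le1 ?expR_gt0 //; apply: le_trans (expR_ge1Dx 1); by rewrite lerDl ler01.
set n : R := d.+1%:R.
have n0 : 0 < n by rewrite ltr0n.
have n1 : 1 + n != 0 by rewrite gt_eqF // addr_gt0.
have -> : 1 - (1 + n)^-1 = (1 + n^-1)^-1.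
  have nn : n != 0 by rewrite gt_eqF.
  clearbody n.
  by field; rewrite nn addrC n1.
have h1 : (1 + n^-1)^-1 >= (expR n^-1)^-1.
  rewrite lef_pV2 ?posrE ?expR_gt0 ?addr_gt0 ?invr_gt0 //; first exact: expR_ge1Dx.
have -> : (expR 1 : R)^-1 = ((expR n^-1)^-1)^+ d.+1.
  by rewrite exprVn -expRM_natl mulfV ?gt_eqF.
apply: lerXn2r => //; rewrite ?nnegrE ?invr_ge0 ?ltW ?expR_gt0 //.
by rewrite addr_gt0 ?invr_gt0.
Qed.

Theorem mainTheorem8 (R : realType) (V : finType) (e : rel V)
  (e_sym : symmetric e) (e_irr : irreflexive e)
  (B : {set V}) (g : config V) (t : V -> option rule)
  (byz : {ffun V -> bool} -> V -> bool * nat) (u : V) :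
  valid_moves e B g t ->
  degree_stabilized e B g ->
  t u = Some Candidacy ->
  in_V1 e B u ->
  (expR 1 * ((maxdeg e)%:R + 1))^-1 <=
    prob_event e R B g t byz
      (fun g' => sv g' u && [forall v, e u v ==> ~~ sv g' v]).
Proof.
move=> [_ Hval] Hstab Htu /andP[uB /forallP nB].
have Hen := Hval u Candidacy uB Htu.
move: Hen => /= /andP[/andP[_ su] /forallP sN].
set p := fun v => cand_prob e R g v.
have p0 : forall v, 0 < p v.
  by move=> v; rewrite /p /cand_prob invr_gt0 ltr_wpDr ?ler0n ?ltr01.
have p1 : forall v, p v <= 1.
  by move=> v; rewrite /p /cand_prob invf_le1 ?ltr_wpDr ?ler0n ?ltr01 // lerDl ler0n.
set ok := fun v (b : bool) => if v == u then b else if e u v then ~~ b else true.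
set wv := fun v (b : bool) => if b then p v else 1 - p v.
have wv0 : forall v b, 0 <= wv v b.
  by move=> v [] ; rewrite /wv ?subr_ge0 ?p1 //; apply: ltW.
set F := fun v b => if ok v b then wv v b else 0.
set h := fun v => if v == u then p u else if e u v then 1 - p v else 1.
have step1 : \prod_v \sum_b F v b <= prob_event e R B g t byz
      (fun g' => sv g' u && [forall v, e u v ==> ~~ sv g' v]).
  rewrite bigA_distr_bigA /prob_event [X in _ <= X]big_mkcond /=.
  apply: ler_sum => c _.
  have [allok|] := boolP [forall v, ok v (c v)].
    have -> : \prod_i F i (c i) = weight e R g c.
      rewrite /weight; apply: eq_bigr => v _.
      by rewrite /F (forallP allok v).
    suff -> : (sv (step e B g t byz c) u && [forall v, e u v ==> ~~ sv (step e B g t byz c) v]) by [].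
    have cu : c u by have := forallP allok u; rewrite /ok eqxx.
    apply/andP; split.
      by rewrite /= (negbTE uB) Htu cu.
    apply/forallP => v; apply/implyP => euv.
    have vu : (v == u) = false by apply/negbTE; apply: contraTneq euv => ->; rewrite e_irr.
    have cv : ~~ c v by have := forallP allok v; rewrite /ok vu euv.
    have vB := implyP (nB v) euv.
    have sv0 := implyP (sN v) euv.
    rewrite /= (negbTE vB).
    by case: (t v) => [[]|] //=; rewrite (negbTE cv).
  rewrite negb_forall => /existsP[v nok].
  rewrite (bigD1 v) //= {1}/F (negbTE nok) mul0r.
  case: ifP => // _.
  by rewrite /weight; apply: prodr_ge0 => i _; exact: (wv0 i (c i)).
have step2 : \prod_v \sum_b F v b = \prod_v h v.
  apply: eq_bigr => v _; rewrite big_bool /= /F /ok /h /wv.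
  case: (v =P u) => [->|_] /=; first by rewrite addr0.
  case: (e u v) => /=; first by rewrite add0r.
  by rewrite addrC subrK.
have step3 : \prod_v h v = p u * \prod_(v | e u v) (1 - p v).
  rewrite (bigD1 u) //= {1}/h eqxx; congr (_ * _).
  rewrite big_mkcond [RHS]big_mkcond /=; apply: eq_bigr => v _.
  rewrite /h; case: (v =P u) => [->|_] /=; last by [].
  by rewrite e_irr.
have pu : ((maxdeg e)%:R + 1)^-1 <= p u.
  have h0 := ler0n R (maxdeg e); have h1 := ler0n R (cand_max e g u).
  rewrite /p /cand_prob lef_pV2 ?posrE; [|lra|lra]. rewrite [X in _ <= X]addrC lerD2l ler_nat.
  apply/bigmax_leqP => w /orP[/eqP->|euw].
    by rewrite Hstab //; apply: leq_bigmax.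
  by rewrite Hstab ?(implyP (nB w) euw) //; apply: leq_bigmax.
have pv : forall v, e u v -> p v <= (1 + (deg e u)%:R)^-1.
  move=> v euv.
  rewrite /p /cand_prob lef_pV2 ?posrE ?ltr_wpDr ?ler0n ?ltr01 ?addr_gt0 // lerD2l ler_nat.
  rewrite -(Hstab u uB); apply: (leq_bigmax_cond (F := xv g)).
  by rewrite e_sym euv orbT.
have pr : (1 - (1 + (deg e u)%:R)^-1) ^+ deg e u <= \prod_(v | e u v) (1 - p v).
  have -> : (1 - (1 + (deg e u)%:R)^-1) ^+ deg e u = \prod_(v in nbh e u) (1 - (1 + (deg e u)%:R)^-1 : R).
    by rewrite prodr_const.
  rewrite (eq_bigl (fun v => e u v)); last by move=> v; rewrite inE.
  apply: ler_prod => v euv; apply/andP; split; last by rewrite lerB // pv.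
  by rewrite subr_ge0 invf_le1 ?ltr_wpDr ?ler0n ?ltr01 // lerDl ler0n.
apply: (le_trans _ step1); rewrite step2 step3 invfM mulrC.
apply: ler_pM. all: try (by rewrite invr_ge0 ltW ?expR_gt0). all: try (by rewrite invr_ge0 addr_ge0 ?ler0n ?ler01). all: try exact pu.
rewrite /deg in pr; apply: le_trans pr; exact: aux.
Qed.
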